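(* Let $G$ be a finite $p$-group whose commutator subgroup $D(G)$ equals its Frattini subgroup and is elementary abelian, $D(G)\cong(\mathbb Z/p\mathbb Z)^n$ with $n\ge1$. Let $\phi:G/D(G)\to\mathrm{Aut}(D(G))$ be the conjugation action $\phi(y)(g)=s(y)^{-1}gs(y)$ (for any lift $s(y)\in G$ of $y$), and fix an $\mathbb F_p$-basis $g_1,\dots,g_n$ of $D(G)$ in which each $\phi(y)$ is lower unitriangular: $\phi(y)(g_j)=g_j+\sum_{i>j}\ell_{i,j}(y)g_i$ with $\ell_{i,j}(y)\in\mathbb F_p$ (additive notation in $D(G)$). Then the following are equivalent: (1) $\Lambda_i(G)/\Lambda_{i-1}(G)\cong\mathbb Z/p\mathbb Z$ for every $i\in\{1,\dots,n\}$, so that $\{e\}=\Lambda_0(G)\subsetneq\Lambda_1(G)\subsetneq\dots\subsetneq\Lambda_n(G)=D(G)$; (2) for every $i\in\{1,\dots,n\}$, $\Lambda_i(G)$ is the $\mathbb F_p$-span of $g_{n-i+1},\dots,g_n$; (3) $n=1$, or $n\ge2$ and for every $i\in\{1,\dots,n-1\}$ the linear form $\ell_{i+1,i}:G/D(G)\to\mathbb F_p$ is nonzero.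
   Context: For a group $G$, define $\Lambda_0(G)=\{e\}$ and, for $i\ge1$, $\Lambda_i(G)=\pi_{i-1}^{-1}\big(Z(G/\Lambda_{i-1}(G))\cap D(G/\Lambda_{i-1}(G))\big)$ where $\pi_{i-1}:G\to G/\Lambda_{i-1}(G)$ is the canonical map, $Z$ denotes the center and $D$ the commutator subgroup. This gives an ascending chain of characteristic subgroups of $G$ contained in $D(G)$. Each $\ell_{i+1,i}$ is a group homomorphism $G/D(G)\to\mathbb F_p$. *)

(* Defs.v *)
From HB Require Import structures.
From mathcomp Require Import all_boot all_order all_algebra all_fingroup all_solvable.
Set Implicit Arguments. Unset Strict Implicit. Unset Printing Implicit Defensive.

Local Open Scope group_scope.

Fixpoint Lambda (gT : finGroupType) (G : {group gT}) (i : nat) : {group gT} :=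
  match i with
  | 0 => 1%G
  | i'.+1 =>
      (G :&: coset (Lambda G i') @*^-1
         ('Z(G / Lambda G i') :&: (G / Lambda G i')^`(1)))%G
  end.

(* The F_p-span (= generated subgroup, inside an elementary abelian p-group)
   of the elements g_a, g_{a+1}, ..., g_b (1-based nat indices). *)
Definition span_idx (gT : finGroupType) (g : nat -> gT) (a b : nat) : {set gT} :=
  <<[set g (val i) | i : 'I_b.+1 & a <= val i]>>.

(* Main.v *)
Require Import Defs.
From HB Require Import structures.
From mathcomp Require Import all_boot all_order all_algebra all_fingroup all_solvable.
From Stdlib Require Import Classical.
Set Implicit Arguments. Unset Strict Implicit. Unset Printing Implicit Defensive.
Local Open Scope group_scope.

Section LambdaFacts.
Variables (gT : finGroupType) (G : {group gT}).

Lemma Lambda_props i : Lambda G i <| G /\ Lambda G i \subset G^`(1).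
Proof.
elim: i => [|i [nHG sHD]] /=; first by rewrite normal1 sub1G.
set H := Lambda G i.
have nGH : G \subset 'N(H) := normal_norm nHG.
have sC : 'Z(G / H) :&: (G / H)^`(1) \subset G / H.
  by rewrite subIset // center_sub.
have E : G :&: coset H @*^-1 ('Z(G / H) :&: (G / H)^`(1))
       = coset H @*^-1 ('Z(G / H) :&: (G / H)^`(1)).
  apply/setIidPr; apply: subset_trans (morphpreS _ sC) _; by rewrite quotientGK.
rewrite E; split.
  have : coset H @*^-1 ('Z(G / H) :&: (G / H)^`(1)) <| coset H @*^-1 (G / H).
    by rewrite cosetpre_normal normalI ?center_normal ?der_normal.
  by rewrite quotientGK.
apply: subset_trans (morphpreS _ (subsetIr _ _)) _.
rewrite -quotient_der // quotientK ?(subset_trans (der_sub 1 G)) //.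
by rewrite mulSGid.
Qed.

Lemma Lambda_mem i x :
  (x \in Lambda G i.+1) <-> (x \in G^`(1) /\ forall y, y \in G -> [~ x, y] \in Lambda G i).
Proof.
have [nHG sHD] := Lambda_props i.
have [_ sH1D] := Lambda_props i.+1.
have nGH : G \subset 'N(Lambda G i) := normal_norm nHG.
have sDG : G^`(1) \subset G := der_sub 1 G.
split.
  move=> Hx; have xD := subsetP sH1D x Hx; split => // y yG.
  move: Hx => /= /setIP [xG /morphpreP [xN /setIP [/setIP [_ cx] _]]].
  have : [set x] / Lambda G i \subset 'C(G / Lambda G i).
    by rewrite quotient_set1 // sub1set.
  rewrite quotient_cents2 ?sub1set // => sR.
  by apply: (subsetP sR); apply: mem_commg; rewrite ?set11.
move=> [xD cx] /=.
have xG : x \in G := subsetP sDG x xD.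
have xN : x \in 'N(Lambda G i) := subsetP nGH x xG.
rewrite inE xG /=; apply/morphpreP; split => //.
rewrite inE; apply/andP; split; last first.
  by rewrite -quotient_der // mem_quotient.
rewrite inE mem_quotient //=.
have : [set x] / Lambda G i \subset 'C(G / Lambda G i).
  rewrite quotient_cents2 ?sub1set //.
  rewrite gen_subG; apply/subsetP => z /imset2P [x' y' /set1P -> yG ->].
  exact: cx.
by rewrite quotient_set1 // sub1set.
Qed.

Lemma Lambda_mono i : Lambda G i \subset Lambda G i.+1.
Proof.
elim: i => [|i IH]; first by rewrite sub1G.
apply/subsetP => x /Lambda_mem [xD cx].
apply/Lambda_mem; split => // y yG; exact: (subsetP IH _ (cx y yG)).
Qed.

End LambdaFacts.


Section Span.
Variables (gT : finGroupType) (G : {group gT}) (p n : nat)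
    (g : nat -> gT) (l : nat -> nat -> gT -> 'F_p).
Hypothesis pr_p : prime p.
Hypothesis abD : p.-abelem (G^`(1)).
Hypothesis spanD : span_idx g 1 n = G^`(1).
Hypothesis indep : forall a : nat -> 'F_p,
      \prod_(1 <= i < n.+1) (g i ^+ a i) = 1 ->
      forall i, (1 <= i <= n)%N -> a i = 0%R.
Hypothesis conjH : forall y, y \in G -> forall j, (1 <= j <= n)%N ->
      g j ^ y = g j * \prod_(j.+1 <= i < n.+1) (g i ^+ l i j y).

Local Notation D := (G^`(1)).
Definition A m := [set g (val i) | i : 'I_n.+1 & (m <= val i)%N].
Local Notation S m := (<<A m>>).

Lemma cDD : abelian D. Proof. exact: abelem_abelian abD. Qed.
Lemma commD x z : x \in D -> z \in D -> commute x z.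
Proof. move=> xD zD; exact: (centsP cDD). Qed.

Lemma val_inord i : (i <= n)%N -> val (inord i : 'I_n.+1) = i.
Proof. move=> H; exact: inordK. Qed.

Lemma memA m i : (m <= i <= n)%N -> g i \in S m.
Proof.
case/andP=> mi i_n; apply: mem_gen; apply/imsetP.
exists (inord i); last by rewrite /= val_inord.
by rewrite inE val_inord.
Qed.

Lemma AS m m' : (m <= m')%N -> S m' \subset S m.
Proof.
move=> mm; apply: genS; apply/subsetP => x /imsetP [i].
rewrite inE => Hi ->; apply/imsetP; exists i => //; rewrite inE.
exact: leq_trans Hi.
Qed.

Lemma SD m : (1 <= m)%N -> S m \subset D.
Proof. by move=> m1; rewrite -spanD; apply: AS. Qed.

Lemma gD i : (1 <= i <= n)%N -> g i \in D.
Proof. by move=> Hi; rewrite -spanD; apply: memA. Qed.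

Lemma Sbig m : (n < m)%N -> S m = 1.
Proof.
move=> nm; rewrite -gen0; congr <<_>>; apply/setP => x; rewrite inE.
apply/imsetP => [[i]]; rewrite inE => Hi _.
have := ltn_ord i; rewrite ltnS => Hin.
by have := leq_trans nm (leq_trans Hi Hin); rewrite ltnn.
Qed.

Lemma Asplit m : (m <= n)%N -> A m = g m |: A m.+1.
Proof.
move=> mn; apply/setP => x; rewrite !inE; apply/imsetP/idP.
  move=> [i]; rewrite inE leq_eqVlt => /orP [/eqP <-| Hi] ->; first by rewrite eqxx.
  by apply/orP; right; apply/imsetP; exists i; rewrite ?inE.
case/orP => [/eqP ->| /imsetP [i]]; first by exists (inord m); rewrite ?inE /= val_inord.
rewrite inE => Hi ->; exists i => //; rewrite inE; exact: ltnW.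
Qed.

Lemma gen_split x (B : {set gT}) : x \in D -> B \subset D -> <<x |: B>> = <[x]> * <<B>>.
Proof.
move=> xD BD.
have cx : <[x]> \subset D by rewrite cycle_subG.
have cB : <<B>> \subset D by rewrite gen_subG.
rewrite -comm_joingE; last by apply: centC; exact: sub_abelian_cent2 cDD cx cB.
by rewrite joing_idr /cycle joing_idl joingE.
Qed.

Lemma Ssplit m : (1 <= m <= n)%N -> S m = <[g m]> * S m.+1.
Proof.
case/andP=> m1 mn; rewrite Asplit // gen_split ?gD ?m1 //.
exact: subset_trans (subset_gen _) (SD (leqW m1)).
Qed.

Definition R m (a : nat -> 'F_p) := \prod_(m <= i < n.+1) g i ^+ a i.

Lemma R_step m a : (m <= n)%N -> R m a = g m ^+ a m * R m.+1 a.
Proof. by move=> mn; rewrite /R big_ltn // ltnS. Qed.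

Lemma R_eq m a b : (forall i, (m <= i <= n)%N -> a i = b i) -> R m a = R m b.
Proof. move=> H; apply: eq_big_nat => i Hi; by rewrite H. Qed.

Lemma R_lo m a : (1 <= m <= n.+1)%N -> (forall i, (i < m)%N -> a i = 0%R) -> R 1 a = R m a.
Proof.
case/andP=> m1 mn H; rewrite /R (@big_cat_nat _ _ _ m) //= big1_seq ?mul1g //.
move=> i; rewrite mem_index_iota => /andP [_ /andP [_ Hi]]; by rewrite (H i Hi) expg0.
Qed.

Lemma expD_p x : x \in D -> x ^+ p = 1.
Proof.
move=> xD; have [->|nx] := eqVneq x 1; first exact: expg1n.
by rewrite -(abelem_order_p abD xD nx) expg_order.
Qed.

Lemma expFp x k : x \in D -> x ^+ ((k%:R)%R : 'F_p) = x ^+ k.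
Proof. by move=> xD; rewrite val_Fp_nat // expg_mod // expD_p. Qed.

Lemma Fp0 k : ((k%:R)%R : 'F_p) = 0%R -> (p %| k)%N.
Proof. move/(congr1 (@nat_of_ord _)); rewrite val_Fp_nat //= => H; by rewrite /dvdn H. Qed.

Lemma R_rep m x : (1 <= m <= n.+1)%N -> x \in S m -> exists a, x = R m a.
Proof.
move=> Hm; move: {2}(n.+1 - m) (erefl (n.+1 - m)) => d; elim: d m Hm x => [|d IH] m /andP [m1 mn] x Hd.
  move: Hd => /eqP; rewrite subn_eq0 => nm.
  have -> : m = n.+1 by apply/eqP; rewrite eqn_leq nm mn.
  rewrite Sbig // => /set1P ->; exists (fun _ => 0%R); by rewrite /R big_geq.
have mn' : (m <= n)%N by rewrite -ltnS ltn_neqAle mn andbT; apply/eqP => E; move: Hd; rewrite E subnn.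
rewrite Ssplit ?m1 // => /mulsgP [y z /cycleP [k ->] Hz ->].
have Hm1 : (1 <= m.+1 <= n.+1)%N by rewrite !ltnS mn'.
have Hd1 : (n.+1 - m.+1 = d)%N by move: Hd; rewrite subSS subSn // => -[].
have [a ->] := IH m.+1 Hm1 z Hd1 Hz.
exists (fun i => if i == m then ((k%:R)%R : 'F_p) else a i).
rewrite (@R_step m _ mn') eqxx expFp ?gD ?m1 //; congr (_ * _).
apply: R_eq => i /andP [Hi _]; by rewrite gtn_eqF.
Qed.

Lemma TIg m : (1 <= m <= n)%N -> <[g m]> :&: S m.+1 = 1.
Proof.
case/andP=> m1 mn; apply/trivgP/subsetP => x /setIP [/cycleP [k ->] Hs].
have gmD : g m \in D by rewrite gD ?m1.
have := groupVr Hs; case/(R_rep (m:=m.+1)); first by rewrite !ltnS mn.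
move=> a Ea.
set b := fun i => if (i < m)%N then 0%R else if i == m then ((k%:R)%R : 'F_p) else a i.
have Hb : R 1 b = 1.
  rewrite (@R_lo m) ?m1 ?(leqW mn) //; last by move=> i Hi; rewrite /b Hi.
  rewrite R_step // /b ltnn eqxx expFp //.
  rewrite (@R_eq _ _ a) -?Ea ?mulgV //.
  by move=> i /andP [Hi _]; rewrite ltnNge (ltnW Hi) /= gtn_eqF.
have := indep Hb (i:=m); rewrite m1 mn /b ltnn eqxx => /(_ isT) /Fp0 pk.
by rewrite inE -(expg_mod _ (expD_p gmD)) (eqP pk) expg0.
Qed.

Lemma ord_g m : (1 <= m <= n)%N -> #[g m] = p.
Proof.
move=> Hm; have gmD := gD Hm; apply: (abelem_order_p abD gmD).
apply/eqP => E.
set b := fun i => if i == m then ((1%:R)%R : 'F_p) else 0%R.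
case/andP: (Hm) => m1 mn.
have Hb : R 1 b = 1.
  rewrite (@R_lo m) ?m1 ?(leqW mn) //; last by move=> i Hi; rewrite /b ltn_eqF.
  rewrite R_step // /b eqxx E expg1n mul1g /R big1_seq //.
  move=> i; rewrite mem_index_iota => /andP [_ /andP [Hi _]]; by rewrite gtn_eqF ?expg0.
have := indep Hb Hm; rewrite /b eqxx => /(congr1 (@nat_of_ord _)); rewrite val_Fp_nat //=.
by rewrite modn_small ?prime_gt1.
Qed.

Lemma card_S m : (1 <= m <= n.+1)%N -> #|S m| = (p ^ (n.+1 - m))%N.
Proof.
move=> Hm; suff: forall d m, (1 <= m <= n.+1)%N -> (n.+1 - m)%N = d -> #|S m| = (p ^ d)%N.
  by move/(_ _ m Hm erefl).
elim=> [|d IH] {Hm} m /andP [m1 mn] Hd.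
  move: Hd => /eqP; rewrite subn_eq0 => nm.
  have -> : m = n.+1 by apply/eqP; rewrite eqn_leq nm mn.
  by rewrite Sbig // cards1.
have mn' : (m <= n)%N by rewrite -ltnS ltn_neqAle mn andbT; apply/eqP => E; move: Hd; rewrite E subnn.
have Hm1 : (1 <= m.+1 <= n.+1)%N by rewrite !ltnS mn'.
have Hd1 : (n.+1 - m.+1 = d)%N by move: Hd; rewrite subSS subSn // => -[].
rewrite Ssplit ?m1 // TI_cardMg ?TIg ?m1 // (IH _ Hm1 Hd1).
by rewrite -orderE ord_g ?m1 // expnS.
Qed.



Local Notation L := (Lambda G).

Lemma commDJ x y : x \in D -> y \in G -> [~ x, y] \in D.
Proof.
move=> xD yG; rewrite commgEl groupM ?groupV // memJ_norm //.
exact: subsetP (normal_norm (der_normal 1 G)) y yG.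
Qed.

Lemma commM x z y : x \in D -> z \in D -> y \in G -> [~ x * z, y] = [~ x, y] * [~ z, y].
Proof.
move=> xD zD yG; rewrite commMgJ; congr (_ * _).
by rewrite conjgE (commD (commDJ xD yG) zD) mulKg.
Qed.

Lemma commX x y k : x \in D -> y \in G -> [~ x ^+ k, y] = [~ x, y] ^+ k.
Proof.
move=> xD yG; elim: k => [|k IH]; first by rewrite !expg0 comm1g.
by rewrite !expgS commM ?groupX // IH.
Qed.

Lemma commg_gen m y : (1 <= m <= n)%N -> y \in G ->
  [~ g m, y] = \prod_(m.+1 <= i < n.+1) g i ^+ l i m y.
Proof. by move=> Hm yG; rewrite commgEl conjH // mulKg. Qed.

Lemma prod_in m j (c : nat -> 'F_p) : (1 <= m <= j)%N ->
  \prod_(j <= i < n.+1) g i ^+ c i \in S m.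
Proof.
case/andP=> m1 mj; rewrite big_seq; apply: group_prod => i.
rewrite mem_index_iota => /andP [ji]; rewrite ltnS => i_n.
by apply: groupX; apply: memA; rewrite i_n (leq_trans mj ji).
Qed.

Lemma CommS m y s : (1 <= m)%N -> y \in G -> s \in S m -> [~ s, y] \in S m.+1.
Proof.
move=> m1 yG; move: s; suff: forall d m, (1 <= m)%N -> (n.+1 - m)%N = d -> forall s, s \in S m -> [~ s, y] \in S m.+1.
  by move/(_ _ m m1 erefl).
elim=> [|d IH] {m m1} m m1 Hd s.
  move: Hd => /eqP; rewrite subn_eq0 => nm.
  by rewrite Sbig // => /set1P ->; rewrite comm1g group1.
have mn' : (m <= n)%N.
  by rewrite leqNgt; apply/negP => nm; move: Hd; rewrite (eqP (_ : n.+1 - m == 0)) // subn_eq0.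
have Hd1 : (n.+1 - m.+1 = d)%N by move: Hd; rewrite subSS subSn // => -[].
rewrite Ssplit ?m1 // => /mulsgP [u s' /cycleP [k ->] sS ->].
have gmD : g m \in D by rewrite gD ?m1.
have sD : s' \in D := subsetP (SD (leqW m1)) _ sS.
rewrite commM ?groupX // commX // groupM //.
  by apply: groupX; rewrite commg_gen ?m1 //; apply: prod_in; rewrite leqnn andbT.
exact: subsetP (AS (leqnSn _)) _ (IH m.+1 (leqW m1) Hd1 _ sS).
Qed.



Lemma gen_norm (B : {set gT}) :
  (forall y, y \in G -> forall b, b \in B -> b ^ y \in <<B>>) -> G \subset 'N(<<B>>).
Proof.
move=> H; apply/normsP => y yG; apply/eqP; rewrite eqEcard cardJg leqnn andbT.
rewrite -genJ gen_subG; apply/subsetP => z; rewrite mem_conjg => Hz.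
by rewrite -(conjgKV y z); apply: H.
Qed.

Lemma S_norm m : (1 <= m)%N -> G \subset 'N(S m).
Proof.
move=> m1; apply: gen_norm => y yG b /imsetP [i]; rewrite inE => Hi ->.
have Hi' : (1 <= i <= n)%N by rewrite (leq_trans m1 Hi) -ltnS ltn_ord.
rewrite conjH // groupM //; first by apply: memA; rewrite Hi -ltnS ltn_ord.
by apply: prod_in; rewrite m1 (leq_trans Hi).
Qed.

Lemma Lambda_span (P3 : n = 1%N \/ ((2 <= n)%N /\
         forall i, (1 <= i <= n.-1)%N -> exists2 y, y \in G & l i.+1 i y != 0%R)) :
  forall i, (i <= n)%N -> L i :=: S (n.+1 - i).
Proof.
elim=> [|i IH] Hi; first by rewrite subn0 Sbig ?ltnSn.
have Hi' : (i <= n)%N := ltnW Hi.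
rewrite subSS; have := IH Hi'; rewrite subSn // => IHi.
set lo := (n - i)%N in IHi *.
have lo1 : (1 <= lo)%N by rewrite subn_gt0.
have lon : (lo <= n)%N by rewrite leq_subr.
apply/eqP; rewrite eqEsubset; apply/andP; split; last first.
  apply/subsetP => x xS; apply/Lambda_mem; split; first exact: subsetP (SD lo1) _ xS.
  by move=> y yG; rewrite IHi; apply: CommS.
apply/subsetP => x /Lambda_mem [xD cx].
suff: forall j, (1 <= j <= lo)%N -> x \in S j by apply; rewrite lo1 leqnn.
elim=> [//|j IHj] /andP [_ jlo].
have [j0|j1] := posnP j; first by rewrite j0; move: xD; rewrite -spanD.
have xSj : x \in S j by apply: IHj; rewrite j1 ltnW.
have jn : (j < n)%N := leq_trans jlo lon.
move: xSj cx; rewrite Ssplit ?j1 ?(ltnW jn) // => /mulsgP [u s /cycleP [k ->] sS ->] cx.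
suff gk : g j ^+ k = 1 by rewrite gk mul1g.
have Hj : (1 <= j <= n.-1)%N by rewrite j1 -ltnS (ltn_predK jn).
have [y yG ly] : exists2 y, y \in G & l j.+1 j y != 0%R.
  case: P3 => [n1|[_ P3]]; last exact: P3.
  by move: jn; rewrite n1 ltnNge j1.
have gjD : g j \in D by rewrite gD ?j1 ?(ltnW jn).
have gj1D : g j.+1 \in D by rewrite gD.
have sD : s \in D := subsetP (SD (leqW j1)) _ sS.
have := cx y yG; rewrite IHi commM ?groupX // commX //.
rewrite commg_gen ?j1 ?(ltnW jn) // big_ltn ?ltnS //.
set c := l j.+1 j y; set w := \prod_(_ <= _ < _) _.
have wS : w \in S j.+2 by apply: prod_in; rewrite leqnn.
have wD : w \in D := subsetP (SD (isT : 1 <= j.+2)%N) _ wS.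
rewrite expgMn; last exact: commD (groupX _ gj1D) wD.
rewrite -expgM -mulgA => H.
have H2 : g j.+1 ^+ (c * k) \in S j.+2.
  have sub : S lo.+1 \subset S j.+2 by apply: AS.
  have := subsetP sub _ H; rewrite groupMr // groupM ?groupX //.
  by apply: CommS.
have : g j.+1 ^+ (c * k) \in <[g j.+1]> :&: S j.+2 by rewrite inE mem_cycle H2.
rewrite TIg ?jn // => /set1P /eqP; rewrite -order_dvdn ord_g ?jn //.
rewrite Euclid_dvdM // => /orP [pc|pk].
  have c0 : (0 < c)%N.
    rewrite lt0n; apply: contra ly => /eqP c0; apply/eqP; apply: val_inj; exact: c0.
  have cp : (c < p)%N by rewrite -[X in (_ < X)%N](card_Fp pr_p) card_ord ltn_ord.
  by rewrite gtnNdvd in pc.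
by apply/eqP; rewrite -order_dvdn ord_g ?j1 ?(ltnW jn).
Qed.

Lemma Lambda_monoS a b : (a <= b)%N -> L a \subset L b.
Proof.
move=> ab; rewrite -(subnKC ab); elim: (b - a)%N => [|d IH]; first by rewrite addn0.
by rewrite addnS (subset_trans IH) ?Lambda_mono.
Qed.

Lemma quo_card i : #|L i.+1 / L i| = (#|L i.+1| %/ #|L i|)%N.
Proof.
have [nG sD] := Lambda_props G i; have [_ sD1] := Lambda_props G i.+1.
rewrite card_quotient ?divgS ?Lambda_mono //.
exact: subset_trans sD1 (subset_trans (der_sub 1 G) (normal_norm nG)).
Qed.

Lemma iso_card i : #|L i.+1| = (p * #|L i|)%N -> (L i.+1 / L i) \isog Zp p.
Proof.
move=> E.
have Q : #|L i.+1 / L i| = p by rewrite quo_card E mulnK ?cardG_gt0.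
have cZ : #|Zp p| = p by rewrite card_Zp ?prime_gt0.
rewrite isog_cyclic_card ?prime_cyclic ?Q ?cZ ?eqxx //.
Qed.

Lemma card_iso i : (L i.+1 / L i) \isog Zp p -> #|L i.+1| = (p * #|L i|)%N.
Proof.
move/card_isog; rewrite quo_card card_Zp ?prime_gt0 // => E.
by rewrite -(Lagrange (Lambda_mono G i)) -divgS ?Lambda_mono // E mulnC.
Qed.

Lemma chain (V : {group gT}) :
  (forall i, (i <= n)%N -> #|L i| = (p ^ i)%N) -> #|D| = (p ^ n)%N ->
  G \subset 'N(V) -> V \subset D -> exists2 j, (j <= n)%N & V :=: L j.
Proof.
move=> cardL cD nVG sVD.
have LnD : L n :=: D.
  by apply/eqP; rewrite eqEcard (Lambda_props G n).2 cD cardL ?leqnn.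
pose P := fun j => (j <= n)%N && (L j \subset V).
have ex : exists j, P j by exists 0%N; rewrite /P sub1G.
have ub : forall i, P i -> (i <= n)%N by move=> i /andP [].
case: (ex_maxnP ex ub) => j /andP [jn sLV] maxj.
exists j => //; apply/eqP; rewrite eqEsubset sLV andbT.
apply/subsetP => z zV; apply/negPn/negP => zL.
have jn' : (j < n)%N.
  rewrite ltn_neqAle jn andbT; apply/eqP => E; apply/negP: zL; apply/negPn.
  by rewrite E LnD (subsetP sVD).
have desc : forall d z, z \in V -> z \in L (j.+1 + d) -> z \notin L j ->
    exists w, [/\ w \in V, w \in L j.+1 & w \notin L j].
  elim=> [|d IH] z' zV' zL' zN; first by exists z'; rewrite addn0 in zL'.
  case: (boolP (z' \in L (j.+1 + d))) => H; first exact: IH z' zV' H zN.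
  rewrite addnS in zL'; move/Lambda_mem: zL' => [zD cz].
  case: (boolP [forall y in G, [~ z', y] \in L (j + d)]) => [/forall_inP Hall|].
    by case/negP: H; rewrite addSn; apply/Lambda_mem; split.
  case/forall_inPn => y yG Hy.
  apply: (IH [~ z', y]).
  - rewrite commgEl groupM ?groupV // memJ_norm //; exact: subsetP nVG y yG.
  - by rewrite addSn in cz; apply: cz.
  - apply: contra Hy => Hw; exact: subsetP (Lambda_monoS (leq_addr d j)) _ Hw.
have zLn : z \in L (j.+1 + (n - j.+1)) by rewrite subnKC // LnD (subsetP sVD).
have [w [wV wL wN]] := desc (n - j.+1)%N z zV zLn zL.
pose K := (L j.+1 :&: V)%G.
have sLK : L j \subset K by rewrite subsetI Lambda_mono sLV.
have sKL : K \subset L j.+1 by rewrite subsetIl.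
have E : #|L j.+1| = (p * #|L j|)%N by rewrite !cardL ?expnS // ltnW.
have E1 := Lagrange sLK; have E2 := Lagrange sKL.
have Hab : (#|K : L j| * #|L j.+1 : K|)%N = p.
  apply/eqP; rewrite -(eqn_pmul2l (cardG_gt0 (L j))) mulnA E1 E2 E.
  by rewrite mulnC.
have a1 : #|K : L j| != 1%N.
  rewrite indexg_eq1; apply/negP => sKj; apply/negP: wN; apply/negPn.
  by apply: (subsetP sKj); rewrite inE wL wV.
have b1 : #|L j.+1 : K| = 1%N.
  have := (primeP pr_p).2 #|K : L j|; rewrite -{1}Hab dvdn_mulr // (negbTE a1) /=.
  move=> /(_ isT) /eqP Ha; move: Hab; rewrite Ha -{2}(muln1 p) => /eqP.
  by rewrite eqn_pmul2l ?prime_gt0 // => /eqP.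
have : L j.+1 \subset V.
  by move: b1 => /eqP; rewrite indexg_eq1 => sLK'; apply: subset_trans sLK' (subsetIr _ _).
by move=> sV; move: (maxj j.+1); rewrite /P jn' sV ltnn => /(_ isT).
Qed.

Lemma card_L0 : #|L 0| = 1%N.
Proof. by rewrite /= cards1. Qed.

Lemma P1_card (P1 : forall i, (1 <= i <= n)%N -> (L i / L i.-1) \isog Zp p) :
  forall i, (i <= n)%N -> #|L i| = (p ^ i)%N.
Proof.
elim=> [|i IH] Hi; first by rewrite card_L0.
by rewrite (card_iso (P1 i.+1 Hi)) IH ?expnS // ltnW.
Qed.

Lemma P21 (P2 : forall i, (1 <= i <= n)%N -> (L i :=: span_idx g (n - i + 1) n)) :
  forall i, (1 <= i <= n)%N -> (L i / L i.-1) \isog Zp p.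
Proof.
have cardL : forall i, (i <= n)%N -> #|L i| = (p ^ i)%N.
  case=> [|i] Hi; first by rewrite card_L0.
  rewrite P2 ?Hi //; rewrite /span_idx card_S ?addn1 ?subSS ?subKn //.
  by rewrite !ltnS leq_subr.
case=> [//|i] /andP [_ Hi]; apply: iso_card.
by rewrite !cardL ?expnS // ltnW.
Qed.

Lemma P13 (cD : #|D| = (p ^ n)%N) (n0 : (0 < n)%N)
  (P1 : forall i, (1 <= i <= n)%N -> (L i / L i.-1) \isog Zp p) :
  n = 1%N \/ ((2 <= n)%N /\
         forall i, (1 <= i <= n.-1)%N -> exists2 y, y \in G & l i.+1 i y != 0%R).
Proof.
have cardL := P1_card P1.
case: (eqVneq n 1%N) => [n1|n1]; [by left | right].
have n2 : (2 <= n)%N by rewrite ltn_neqAle eq_sym n1 n0.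
split=> // i /andP [i1 iN].
have i_n : (i < n)%N by apply: leq_ltn_trans iN _; rewrite ltn_predL.
case: (classic (exists2 y, y \in G & l i.+1 i y != 0%R)) => // Hno; exfalso.
have H0 : forall y, y \in G -> l i.+1 i y = 0%R.
  move=> y yG; case: (eqVneq (l i.+1 i y) 0%R) => // Hne; case: Hno; by exists y.
have gi : g i \in D by rewrite gD ?i1 ?(ltnW i_n).
set B := g i |: A i.+2.
have V2S : S i.+2 \subset <<B>> by apply: genS; apply: subsetUr.
have V2D : <<B>> \subset D.
  rewrite gen_subG subUset sub1set gi.
  exact: subset_trans (subset_gen _) (SD (isT : (1 <= i.+2)%N)).
have nV2 : G \subset 'N(<<B>>).
  apply: gen_norm => y yG b; case/setU1P => [->|bA].
    rewrite conjH ?i1 ?(ltnW i_n) // big_ltn ?ltnS //.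
    rewrite (H0 y yG) expg0 mul1g.
    rewrite groupM //; first by apply: mem_gen; rewrite setU11.
    by apply: (subsetP V2S); apply: prod_in; rewrite leqnn.
  apply: (subsetP V2S); rewrite memJ_norm ?mem_gen //.
  exact: subsetP (S_norm (isT : (1 <= i.+2)%N)) y yG.
have [j1 _ E1] := chain (V:=<<A i.+1>>%G) cardL cD (S_norm (isT : (1 <= i.+1)%N)) (SD (isT : (1 <= i.+1)%N)).
have [j2 _ E2] := chain (V:=<<B>>%G) cardL cD nV2 V2D.
have c1 : #|S i.+1| = (p ^ (n - i))%N by rewrite card_S ?subSS // !ltnS (ltnW i_n).
have TI2 : <[g i]> :&: S i.+2 = 1.
  apply/trivgP; rewrite -(TIg (m:=i)) ?i1 ?(ltnW i_n) //; apply: setIS; exact: AS.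
have c2 : #|<<B>>| = (p ^ (n - i))%N.
  rewrite gen_split //; last exact: subset_trans (subset_gen _) (SD (isT : (1 <= i.+2)%N)).
  rewrite TI_cardMg // -orderE ord_g ?i1 ?(ltnW i_n) // card_S ?ltnS //.
  by rewrite -expnS subSS -subSn.
have sub : <<B>> \subset S i.+1.
  case: (leqP j1 j2) => h.
    have s12 : S i.+1 \subset <<B>> by rewrite E1 E2 Lambda_monoS.
    have : S i.+1 == <<B>> by rewrite eqEcard s12 c1 c2 leqnn.
    by move/eqP <-.
  by rewrite E1 E2 Lambda_monoS // ltnW.
have : g i \in <[g i]> :&: S i.+1.
  by rewrite inE cycle_id (subsetP sub) // mem_gen // setU11.
rewrite TIg ?i1 ?(ltnW i_n) // => /set1P gi1.
have := ord_g (m:=i); rewrite i1 (ltnW i_n) gi1 order1 => /(_ isT) p1.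
by move: (prime_gt1 pr_p); rewrite -p1.
Qed.

End Span.

Theorem proposition5p2 (gT : finGroupType) (G : {group gT}) (p n : nat)
    (g : nat -> gT) (l : nat -> nat -> gT -> 'F_p) :
  prime p ->
  p.-group G ->
  G^`(1) = 'Phi(G) ->
  p.-abelem (G^`(1)) ->
  #|G^`(1)| = (p ^ n)%N ->
  (1 <= n)%N ->
  (* g_1, ..., g_n is an F_p-basis of D(G): spanning ... *)
  span_idx g 1 n = G^`(1) ->
  (* ... and linearly independent *)
  (forall a : nat -> 'F_p,
      \prod_(1 <= i < n.+1) (g i ^+ a i) = 1 ->
      forall i, (1 <= i <= n)%N -> a i = 0%R) ->
  (* lower unitriangular conjugation action:
     phi(y)(g_j) = g_j + sum_{i>j} l_{i,j}(y) g_i  (multiplicatively) *)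
  (forall y, y \in G -> forall j, (1 <= j <= n)%N ->
      g j ^ y = g j * \prod_(j.+1 <= i < n.+1) (g i ^+ l i j y)) ->
  [<-> (* (1) *)
       (forall i, (1 <= i <= n)%N -> (Lambda G i / Lambda G i.-1) \isog Zp p);
       (* (2) *)
       (forall i, (1 <= i <= n)%N -> (Lambda G i :=: span_idx g (n - i + 1) n));
       (* (3) *)
       (n = 1%N \/
        ((2 <= n)%N /\
         forall i, (1 <= i <= n.-1)%N -> exists2 y, y \in G & l i.+1 i y != 0%R))].
Proof.
move=> pr_p _ _ abD cD n0 spanD indep conjH.
have P32 := Lambda_span pr_p abD spanD indep conjH.
have P21 := P21 pr_p abD spanD indep.
have P13 := P13 pr_p abD spanD indep conjH cD n0.
tfae=> [H1|H2|H3].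
- move=> i /andP [i1 iN]; rewrite addn1 -subSn //; exact: P32 (P13 H1) i iN.
- exact: P13 (P21 H2).
- apply: P21 => i /andP [i1 iN]; rewrite addn1 -subSn //; exact: P32 H3 i iN.
Qed.
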